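(* Define the sequence $(\psi_n)_{n\ge1}$ by $\psi_1=1$ and, for $n\ge2$, $$\psi_n=\Big(1+\frac1n\Big)\psi_{n-1}\ \text{ if $n$ is even},\qquad \psi_n=\Big(1+\frac1n\Big)\psi_{n-1}-\frac{2}{n}\psi_{(n-1)/2}\ \text{ if $n$ is odd}.$$ Then $\lim_{n\to\infty}\psi_n=\dfrac{1}{2-2\ln2}$. Equivalently, the Taylor coefficients $\varphi_n=n\psi_n$ of the solution $\Phi$ of $\int_0^1\Phi(rz+(1-r)z^2)\,dr=\frac12\Phi(z)$, $\Phi(0)=0$, $\Phi'(0)=1$, satisfy $\varphi_n/n\to\frac1{2(1-\ln 2)}$. *)

(* Defs.v *)
From Stdlib Require Import Reals Arith.
Open Scope R_scope.

(* The recursion defining psi_n (n >= 1); values at n = 0 are irrelevant. *)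
Definition psi_rec (psi : nat -> R) : Prop :=
  psi 1%nat = 1 /\
  forall n : nat, (2 <= n)%nat ->
    (Nat.even n = true -> psi n = (1 + / INR n) * psi (n - 1)%nat) /\
    (Nat.even n = false ->
       psi n = (1 + / INR n) * psi (n - 1)%nat - 2 / INR n * psi ((n - 1) / 2)%nat).

(* Main.v *)
Require Import Defs.
From Stdlib Require Import Reals Arith Lia Lra Psatz.
Open Scope R_scope.

Lemma ln_le' : forall x y, 0 < x -> x <= y -> ln x <= ln y.
Proof. intros x y Hx Hxy. destruct (Rle_lt_or_eq_dec _ _ Hxy) as [Harm|Harm].
  - left; apply ln_increasing; auto.
  - subst; right; reflexivity. Qed.

Lemma ln_div' : forall x y, 0 < x -> 0 < y -> ln (x / y) = ln x - ln y.
Proof. intros x y Hx Hy. unfold Rdiv. rewrite ln_mult, ln_Rinv; try lra.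
  apply Rinv_0_lt_compat; auto. Qed.

Lemma ln_le_sub1 : forall y, 0 < y -> ln y <= y - 1.
Proof. intros y Hy. rewrite <- (ln_exp (y - 1)). apply ln_le'; auto.
  pose proof (exp_ineq1_le (y-1)). lra. Qed.

Lemma ln2_lt_1 : ln 2 < 1.
Proof. rewrite <- ln_exp. apply ln_increasing; [lra|].
  pose proof (exp_ineq1 1). lra. Qed.

Lemma ln2_pos : 0 < ln 2.
Proof. pose proof ln_lt_2. lra. Qed.

Fixpoint S (f : nat -> R) (n : nat) : R :=
  match n with O => 0 | Datatypes.S k => S f k + f k end.

Lemma S_plus : forall f g n, S (fun k => f k + g k) n = S f n + S g n.
Proof. intros f g n; induction n; simpl; [lra|]. rewrite IHn; ring. Qed.

Lemma S_scal : forall c f n, S (fun k => c * f k) n = c * S f n.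
Proof. intros c f n; induction n; simpl; [lra|]. rewrite IHn; ring. Qed.

Lemma S_ext : forall f g n, (forall k, f k = g k) -> S f n = S g n.
Proof. intros f g n Harm; induction n; simpl; [lra|]. rewrite IHn, Harm; ring. Qed.

Lemma S_bound : forall f g B a b, (a <= b)%nat ->
  (forall k, (a <= k < b)%nat -> Rabs (f k) <= B * g k) ->
  Rabs (S f b - S f a) <= B * (S g b - S g a).
Proof. intros f g B a b Hab Harm. induction b.
  - assert (a = 0%nat) by lia. subst. simpl. rewrite Rminus_0_r, Rabs_R0. lra.
  - destruct (Nat.eq_dec a (Datatypes.S b)) as [E|E].
    + subst. rewrite !Rminus_diag, Rabs_R0. lra.
    + simpl. assert (IH := IHb ltac:(lia) ltac:(intros; apply Harm; lia)).
      assert (Hb := Harm b ltac:(lia)).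
      replace (S f b + f b - S f a) with ((S f b - S f a) + f b) by ring.
      eapply Rle_trans; [apply Rabs_triang|]. nra. Qed.

Definition Harm := S (fun k => 1 / INR (Datatypes.S k)).

Lemma H_step : forall b, Harm (Datatypes.S b) - Harm b = 1 / (INR b + 1).
Proof. intros b. unfold Harm. cbn [S]. rewrite S_INR. field. pose proof (pos_INR b). lra. Qed.

Lemma H_upper : forall a b, (1 <= a <= b)%nat -> Harm b - Harm a <= ln (INR b) - ln (INR a).
Proof. intros a b [Ha Hab]. induction b.
  - lia.
  - destruct (Nat.eq_dec a (Datatypes.S b)) as [E|E]. subst; lra.
    assert (IH := IHb ltac:(lia)).
    assert (Hb : 1 <= INR b) by (apply (le_INR 1); lia).
    pose proof (H_step b). rewrite S_INR.
    pose proof (ln_le_sub1 (INR b / (INR b + 1)) ltac:(apply Rdiv_lt_0_compat; lra)) as Hl.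
    rewrite ln_div' in Hl by lra.
    replace (INR b / (INR b + 1) - 1) with (- (1 / (INR b + 1))) in Hl by (field; lra).
    lra. Qed.

Lemma H_lower : forall a b, (a <= b)%nat -> ln (INR b + 1) - ln (INR a + 1) <= Harm b - Harm a.
Proof. intros a b Hab. induction b.
  - assert (a = 0%nat) by lia. subst. lra.
  - destruct (Nat.eq_dec a (Datatypes.S b)) as [E|E]. subst; lra.
    assert (IH := IHb ltac:(lia)).
    assert (Hb : 0 <= INR b) by apply pos_INR.
    pose proof (H_step b). rewrite S_INR.
    pose proof (ln_le_sub1 ((INR b + 1 + 1) / (INR b + 1)) ltac:(apply Rdiv_lt_0_compat; lra)) as Hl.
    rewrite ln_div' in Hl by lra.
    replace ((INR b + 1 + 1) / (INR b + 1) - 1) with (1 / (INR b + 1)) in Hl by (field; lra).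
    lra. Qed.


Lemma INR2 : forall m, INR (2 * m) = 2 * INR m.
Proof. intros; rewrite mult_INR; simpl; ring. Qed.

Lemma rec_even : forall psi m, psi_rec psi ->
  psi (2 * m + 2)%nat = (1 + / (2 * INR m + 2)) * psi (2 * m + 1)%nat.
Proof. intros psi m [_ R]. destruct (R (2*m+2)%nat ltac:(lia)) as [E _].
  rewrite E.
  - replace (2 * m + 2 - 1)%nat with (2*m+1)%nat by lia.
    rewrite plus_INR, INR2. simpl (INR 2). replace (1+1) with 2 by ring. reflexivity.
  - replace (2*m+2)%nat with (2 + 2 * m)%nat by lia. rewrite Nat.even_add_mul_2. reflexivity.
Qed.

Lemma rec_odd : forall psi m, psi_rec psi -> (1 <= m)%nat ->
  psi (2 * m + 1)%nat = (1 + / (2 * INR m + 1)) * psi (2 * m)%nat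
     - 2 / (2 * INR m + 1) * psi m.
Proof. intros psi m [_ R] Hm. destruct (R (2*m+1)%nat ltac:(lia)) as [_ E].
  rewrite E.
  - replace (2 * m + 1 - 1)%nat with (2*m)%nat by lia.
    replace ((2 * m) / 2)%nat with m by (rewrite Nat.mul_comm, Nat.div_mul; lia).
    rewrite plus_INR, INR2. simpl (INR 1). reflexivity.
  - replace (2*m+1)%nat with (1 + 2 * m)%nat by lia. rewrite Nat.even_add_mul_2. reflexivity.
Qed.

Definition P psi := S (fun k => psi k / INR (Datatypes.S k)).

Lemma P_step : forall psi b, P psi (Datatypes.S b) = P psi b + psi b / (INR b + 1).
Proof. intros. unfold P. cbn [S]. rewrite S_INR. reflexivity. Qed.

Lemma identE : forall psi, psi_rec psi -> forall m,
  (2 * INR m + 1) / (2 * INR m + 2) * psi (2 * m + 1)%nat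
   = 1/2 + P psi (2 * m + 1)%nat - P psi (m + 1)%nat.
Proof. intros psi Hr m. induction m.
  - simpl. destruct Hr as [H1 _]. rewrite H1. unfold P. simpl. field.
  - pose proof (pos_INR m) as Hm.
    pose proof (rec_odd psi (Datatypes.S m) Hr ltac:(lia)) as Ho.
    pose proof (rec_even psi m Hr) as He.
    replace (2 * Datatypes.S m)%nat with (2*m+2)%nat in Ho by lia.
    replace (2 * m + 2 + 1)%nat with (2 * Datatypes.S m + 1)%nat in Ho by lia.
    rewrite Ho.
    replace (2 * Datatypes.S m + 1)%nat with (Datatypes.S (Datatypes.S (2*m+1))) by lia.
    replace (Datatypes.S m + 1)%nat with (Datatypes.S (m + 1)) by lia.
    rewrite !P_step. 
    assert (HP : P psi (2*m+1)%nat = (2*INR m+1)/(2*INR m+2)*psi(2*m+1)%nat - 1/2 + P psi (Datatypes.S m)).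
    { replace (Datatypes.S m) with (m+1)%nat by lia. rewrite IHm; ring. }
    replace (Datatypes.S (2*m+1)) with (2*m+2)%nat by lia.
    replace (m+1)%nat with (Datatypes.S m) by lia.
    rewrite HP, !He. rewrite !S_INR, !plus_INR, !INR2. simpl (INR 1). simpl (INR 2).
    field. lra.
Qed.


Definition Lim := 1 / (2 - 2 * ln 2).

Lemma Lim_pos : 0 < Lim.
Proof. unfold Lim. pose proof ln2_lt_1. apply Rdiv_lt_0_compat; lra. Qed.

Lemma Lim_eq : Lim * (1 - ln 2) = 1/2.
Proof. unfold Lim. pose proof ln2_lt_1. field. lra. Qed.

Lemma absbound : forall c L h l2 D B t x,
  0 <= t -> c = 1 + t -> t <= (1 - l2)/2 -> t <= 2 * x -> x <= 1 ->
  0 <= l2 - h -> l2 - h <= x -> 0 <= h -> Rabs D <= B * h ->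
  0 < L -> 0 <= B -> 0 < l2 < 1 -> L * (1 - l2) = 1/2 ->
  Rabs (c * (1/2 + L * h + D) - L) <= (1 + l2)/2 * B + 5 * L * x.
Proof. intros c L h l2 D B t x Ht Hc Ht1 Ht2 Hx Hh1 Hh2 Hh0 HD HL HB Hl2 HLe.
  replace (c * (1/2 + L * h + D) - L) with (t * L - c * (L * (l2 - h)) + c * D).
  2:{ rewrite Hc. replace (1/2) with (L * (1 - l2)) by exact HLe. ring. }
  assert (A1 : Rabs (t * L) <= 2 * x * L).
  { rewrite Rabs_pos_eq by nra. nra. }
  assert (A2 : Rabs (c * (L * (l2 - h))) <= 3 * L * x).
  { assert (0 <= L * (l2 - h)) by (apply Rmult_le_pos; lra).
    rewrite Rabs_pos_eq by (apply Rmult_le_pos; lra).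
    assert (L * (l2 - h) <= L * x) by (apply Rmult_le_compat_l; lra).
    assert (c * (L * (l2 - h)) <= 3 * (L * (l2 - h))) by (apply Rmult_le_compat_r; lra).
    nra. }
  assert (A3 : Rabs (c * D) <= (1 + l2)/2 * B).
  { rewrite Rabs_mult, (Rabs_pos_eq c) by lra.
    assert (B * h <= B * l2) by nra.
    assert (c * Rabs D <= c * (B * l2)) by (apply Rmult_le_compat_l; lra).
    assert (c * l2 <= (1 + l2)/2) by (rewrite Hc; nra).
    assert (B * (c * l2) <= B * ((1+l2)/2)) by (apply Rmult_le_compat_l; lra).
    nra. }
  eapply Rle_trans. apply Rabs_triang.
  replace (t * L - c * (L * (l2 - h))) with (t * L + - (c * (L * (l2 - h)))) by ring.
  eapply Rle_trans. apply Rplus_le_compat_r. apply Rabs_triang.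
  rewrite Rabs_Ropp. lra.
Qed.

Definition Ee psi := S (fun k => (psi k - Lim) / INR (Datatypes.S k)).

Lemma P_decomp : forall psi n, P psi n = Lim * Harm n + Ee psi n.
Proof. intros psi n. unfold P, Harm, Ee. rewrite <- S_scal, <- S_plus.
  apply S_ext. intros k. assert (0 < INR (Datatypes.S k)) by (apply lt_0_INR; lia).
  field. lra. Qed.

Lemma h_bounds : forall m,
  let h := Harm (2*m+1)%nat - Harm (m+1)%nat in
  0 <= h /\ h <= ln 2 /\ ln 2 - h <= 1 / (INR m + 1).
Proof. intros m h. pose proof (pos_INR m) as Hm.
  pose proof (H_upper (m+1) (2*m+1) ltac:(lia)) as Hu.
  pose proof (H_lower (m+1) (2*m+1) ltac:(lia)) as Hl.
  fold h in Hu, Hl. rewrite !plus_INR, INR2 in Hu, Hl. simpl (INR 1) in Hu, Hl.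
  assert (E1 : ln (2 * INR m + 1) - ln (INR m + 1) <= ln 2).
  { rewrite <- ln_div' by lra. apply ln_le'. apply Rdiv_lt_0_compat; lra.
    apply Rmult_le_reg_r with (INR m + 1). lra. unfold Rdiv. rewrite Rmult_assoc, Rinv_l by lra. lra. }
  assert (E2 : ln (2 * INR m + 1 + 1) = ln 2 + ln (INR m + 1)).
  { rewrite <- ln_mult by lra. f_equal; ring. }
  assert (E3 : ln (INR m + 1 + 1) - ln (INR m + 1) <= 1 / (INR m + 1)).
  { rewrite <- ln_div' by lra. eapply Rle_trans. apply ln_le_sub1. apply Rdiv_lt_0_compat; lra.
    right. field. lra. }
  assert (E4 : ln (INR m + 1 + 1) <= ln (2 * INR m + 1 + 1)) by (apply ln_le'; lra).
  lra. Qed.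

Definition theta := (1 + ln 2) / 2.

Lemma step : forall psi m B, psi_rec psi ->
  2 / (2 * INR m + 1) <= (1 - ln 2) / 2 -> 0 <= B ->
  (forall k, (m + 1 <= k < 2 * m + 1)%nat -> Rabs (psi k - Lim) <= B) ->
  Rabs (psi (2*m+1)%nat - Lim) <= theta * B + 5 * Lim * (1 / (INR m + 1)) /\
  Rabs (psi (2*m+2)%nat - Lim) <= theta * B + 5 * Lim * (1 / (INR m + 1)).
Proof. intros psi m B Hr Hm0 HB Hw. pose proof (pos_INR m) as Hm.
  pose proof (h_bounds m) as [Hh0 [Hh1 Hh2]].
  set (h := Harm (2*m+1)%nat - Harm (m+1)%nat) in *.
  set (D := Ee psi (2*m+1)%nat - Ee psi (m+1)%nat).
  assert (HD : Rabs D <= B * h).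
  { unfold D, h, Ee, Harm. apply S_bound. lia. intros k Hk.
    assert (0 < INR (Datatypes.S k)) by (apply lt_0_INR; lia).
    unfold Rdiv. rewrite Rabs_mult, (Rabs_pos_eq (/ _)) by (left; apply Rinv_0_lt_compat; lra).
    rewrite Rmult_1_l. apply Rmult_le_compat_r. left; apply Rinv_0_lt_compat; lra. apply Hw; lia. }
  pose proof (identE psi Hr m) as HE. rewrite !P_decomp in HE.
  assert (HX : psi (2*m+1)%nat = (1 + 1/(2*INR m+1)) * (1/2 + Lim * h + D)).
  { unfold h, D. replace (1/2 + Lim * (Harm (2*m+1)%nat - Harm (m+1)%nat) + (Ee psi (2*m+1)%nat - Ee psi (m+1)%nat))
      with (1/2 + (Lim * Harm (2 * m + 1)%nat + Ee psi (2 * m + 1)%nat) - (Lim * Harm (m + 1)%nat + Ee psi (m + 1)%nat)) by ring.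
    rewrite <- HE. field. lra. }
  pose proof ln2_lt_1. pose proof ln2_pos. pose proof Lim_pos. pose proof Lim_eq.
  assert (Hx : 1 / (INR m + 1) <= 1).
  { unfold Rdiv. rewrite Rmult_1_l. rewrite <- Rinv_1. apply Rinv_le_contravar; lra. }
  assert (T1 : 2 / (2 * INR m + 1) <= 2 * (1 / (INR m + 1))).
  { unfold Rdiv. rewrite Rmult_1_l. apply Rmult_le_compat_l. lra. apply Rinv_le_contravar; lra. }
  assert (T0 : 1 / (2 * INR m + 1) <= 2 / (2 * INR m + 1)).
  { unfold Rdiv. apply Rmult_le_compat_r. left; apply Rinv_0_lt_compat; lra. lra. }
  assert (T00 : 0 <= 1 / (2 * INR m + 1)).
  { unfold Rdiv. rewrite Rmult_1_l. left; apply Rinv_0_lt_compat; lra. }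
  split.
  - rewrite HX. unfold theta. apply absbound with (t := 1 / (2 * INR m + 1)); try lra.
  - rewrite (rec_even psi m Hr), HX.
    replace ((1 + / (2 * INR m + 2)) * ((1 + 1 / (2 * INR m + 1)) * (1 / 2 + Lim * h + D)))
      with ((1 + 2 / (2 * INR m + 1)) * (1 / 2 + Lim * h + D)) by (field; lra).
    unfold theta. apply absbound with (t := 2 / (2 * INR m + 1)); try lra.
Qed.


Lemma decomp : forall n, (1 <= n)%nat -> exists m, n = (2*m+1)%nat \/ n = (2*m+2)%nat.
Proof. intros n Hn. destruct (Nat.Even_or_Odd n) as [[k Hk]|[k Hk]].
  - exists (k-1)%nat. right. lia.
  - exists k. left. lia. Qed.

Definition eta m := 5 * Lim * (1 / (INR m + 1)).

Lemma eta_mono : forall m m', (m <= m')%nat -> eta m' <= eta m.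
Proof. intros m m' H. unfold eta. pose proof Lim_pos.
  apply Rmult_le_compat_l. lra. unfold Rdiv. rewrite !Rmult_1_l.
  apply Rinv_le_contravar. pose proof (pos_INR m); lra. apply le_INR in H. lra. Qed.

Lemma eta_pos : forall m, 0 <= eta m.
Proof. intros m. unfold eta. pose proof Lim_pos. pose proof (pos_INR m).
  apply Rmult_le_pos. lra. unfold Rdiv; rewrite Rmult_1_l; left; apply Rinv_0_lt_compat; lra. Qed.

Lemma theta_bounds : 0 < theta < 1.
Proof. unfold theta. pose proof ln2_lt_1. pose proof ln2_pos. lra. Qed.

Lemma m0_exists : exists m0, forall m, (m0 <= m)%nat -> 2 / (2 * INR m + 1) <= (1 - ln 2) / 2.
Proof. pose proof ln2_lt_1. destruct (INR_unbounded (4 / (1 - ln 2))) as [m0 Hm0].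
  exists m0. intros m Hm. apply le_INR in Hm.
  assert (0 < 1 - ln 2) by lra.
  assert (4 / (1 - ln 2) * (1 - ln 2) = 4) by (field; lra).
  apply Rmult_le_reg_r with ((2 * INR m + 1) * (2 / (1 - ln 2))).
  { apply Rmult_lt_0_compat. pose proof (pos_INR m); lra. apply Rdiv_lt_0_compat; lra. }
  replace (2 / (2 * INR m + 1) * ((2 * INR m + 1) * (2 / (1 - ln 2)))) with (4 / (1 - ln 2))
    by (field; split; [lra| pose proof (pos_INR m); lra]).
  replace ((1 - ln 2) / 2 * ((2 * INR m + 1) * (2 / (1 - ln 2)))) with (2 * INR m + 1) by (field; lra).
  pose proof (pos_INR m). lra. Qed.

Fixpoint maxe (f : nat -> R) (n : nat) : R :=
  match n with O => f O | Datatypes.S k => Rmax (maxe f k) (f (Datatypes.S k)) end.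

Lemma maxe_ge : forall f n k, (k <= n)%nat -> f k <= maxe f n.
Proof. intros f n; induction n; intros k Hk.
  - assert (k = 0%nat) by lia; subst; simpl; lra.
  - simpl. destruct (Nat.eq_dec k (Datatypes.S n)) as [E|E].
    + subst. apply Rmax_r.
    + eapply Rle_trans. apply IHn. lia. apply Rmax_l. Qed.

Lemma maxe_nonneg : forall f n, (forall k, 0 <= f k) -> 0 <= maxe f n.
Proof. intros f n Hf. eapply Rle_trans. apply (Hf 0%nat). apply maxe_ge. lia. Qed.

Definition ee (psi : nat -> R) n := Rabs (psi n - Lim).

Lemma bounded (psi : nat -> R) (Hr : psi_rec psi) : let e := ee psi in exists B, 0 <= B /\ forall n, e n <= B.
Proof. intros e. destruct m0_exists as [m0 Hm0]. pose proof theta_bounds as Ht.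
  set (B := Rmax (maxe e (2*m0+2)) (eta m0 / (1 - theta))).
  assert (HB0 : 0 <= B).
  { eapply Rle_trans; [|apply Rmax_l]. apply maxe_nonneg. intros; apply Rabs_pos. }
  exists B. split; auto.
  intros n. induction n as [n IH] using (well_founded_induction lt_wf).
  destruct (le_lt_dec n (2*m0+2)) as [Hn|Hn].
  - eapply Rle_trans; [|apply Rmax_l]. apply maxe_ge; auto.
  - destruct (decomp n ltac:(lia)) as [m Hm].
    assert (Hmm : (m0 <= m)%nat) by lia.
    assert (Hw : forall k, (m + 1 <= k < 2 * m + 1)%nat -> Rabs (psi k - Lim) <= B).
    { intros k Hk. apply (IH k). lia. }
    destruct (step psi m B Hr (Hm0 m Hmm) HB0 Hw) as [S1 S2].
    assert (Heta : eta m <= (1 - theta) * B).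
    { eapply Rle_trans. apply eta_mono. exact Hmm.
      assert (eta m0 / (1 - theta) <= B) by apply Rmax_r.
      apply Rmult_le_reg_r with (/ (1 - theta)). apply Rinv_0_lt_compat; lra.
      replace ((1 - theta) * B * / (1 - theta)) with B by (field; lra). exact H. }
    unfold eta in Heta.
    destruct Hm as [-> | ->]; unfold e, ee; lra.
Qed.


Lemma conv (psi : nat -> R) (Hr : psi_rec psi) : Un_cv psi Lim.
Proof. set (e := ee psi). intros eps Heps.
  destruct (bounded psi Hr) as [B [HB0 HB]].
  destruct m0_exists as [m0 Hm0]. pose proof theta_bounds as Ht. pose proof Lim_pos as HL.
  destruct (INR_unbounded (10 * Lim / (eps * (1 - theta)))) as [m2 Hm2].
  set (m1 := (m0 + m2)%nat).
  assert (He1 : eta m1 / (1 - theta) <= eps / 2).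
  { unfold eta. assert (INR m2 <= INR m1) by (apply le_INR; unfold m1; lia).
    pose proof (pos_INR m1).
    assert (0 < eps * (1 - theta)) by (apply Rmult_lt_0_compat; lra).
    assert (10 * Lim / (eps * (1 - theta)) * (eps * (1 - theta)) = 10 * Lim) by (field; lra).
    assert (10 * Lim <= INR m1 * (eps * (1 - theta))).
    { assert (10 * Lim / (eps * (1 - theta)) * (eps * (1 - theta)) <= INR m1 * (eps * (1 - theta))).
      apply Rmult_le_compat_r; lra. lra. }
    apply Rmult_le_reg_r with (2 * (1 - theta) * (INR m1 + 1)). 
    apply Rmult_lt_0_compat; lra.
    replace (5 * Lim * (1 / (INR m1 + 1)) / (1 - theta) * (2 * (1 - theta) * (INR m1 + 1))) with (10 * Lim)
      by (field; lra).
    nra. }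
  set (eta1 := eta m1) in *.
  pose (N := fix N j := match j with O => O | Datatypes.S j => (2 * (N j + m1) + 1)%nat end).
  pose (Bj := fix Bj j := match j with O => B | Datatypes.S j => theta * Bj j + eta1 end).
  assert (HBj0 : forall j, 0 <= Bj j).
  { induction j; simpl. lra. pose proof (eta_pos m1). fold eta1 in H. nra. }
  assert (Hind : forall j n, (N j <= n)%nat -> e n <= Bj j).
  { induction j; intros n Hn.
    - simpl. apply HB.
    - simpl in Hn. destruct (decomp n ltac:(lia)) as [m Hm].
      assert (Hmm : (N j + m1 <= m)%nat) by lia.
      assert (Hw : forall k, (m + 1 <= k < 2 * m + 1)%nat -> Rabs (psi k - Lim) <= Bj j).
      { intros k Hk. apply IHj. lia. }
      destruct (step psi m (Bj j) Hr (Hm0 m ltac:(unfold m1 in Hmm; lia)) (HBj0 j) Hw) as [S1 S2].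
      assert (eta m <= eta1) by (apply eta_mono; lia).
      unfold eta in H. simpl Bj.
      destruct Hm as [-> | ->]; unfold e, ee; lra. }
  assert (Hclosed : forall j, Bj j <= theta ^ j * B + eta1 / (1 - theta)).
  { induction j; simpl.
    - pose proof (eta_pos m1). fold eta1 in H.
      assert (0 <= eta1 / (1 - theta)) by (apply Rmult_le_pos; [lra| left; apply Rinv_0_lt_compat; lra]). lra.
    - assert (theta * Bj j <= theta * (theta ^ j * B + eta1 / (1 - theta))) by (apply Rmult_le_compat_l; lra).
      replace (theta * theta ^ j * B + eta1 / (1 - theta)) with (theta * (theta ^ j * B + eta1 / (1 - theta)) + eta1)
        by (field; lra). lra. }
  destruct (pow_lt_1_zero theta ltac:(rewrite Rabs_pos_eq; lra) (eps / (2 * (B + 1)))) as [J HJ].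
  { apply Rdiv_lt_0_compat; lra. }
  exists (N J). intros n Hn. unfold R_dist.
  specialize (HJ J (le_n J)). rewrite Rabs_pos_eq in HJ by (apply pow_le; lra).
  assert (theta ^ J * (B + 1) < eps / 2).
  { apply Rmult_lt_reg_r with (/ (B + 1)). apply Rinv_0_lt_compat; lra.
    replace (theta ^ J * (B + 1) * / (B + 1)) with (theta ^ J) by (field; lra).
    replace (eps / 2 * / (B + 1)) with (eps / (2 * (B + 1))) by (field; lra). exact HJ. }
  assert (0 <= theta ^ J) by (apply pow_le; lra).
  pose proof (Hind J n Hn). pose proof (Hclosed J). unfold e, ee in *. nra.
Qed.


Theorem mainTheorem6 (psi : nat -> R) :
  psi_rec psi -> Un_cv psi (1 / (2 - 2 * ln 2)).
Proof. intros Hr. exact (conv psi Hr). Qed.
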